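(* Let $(X,\sigma,\tau)$ be a separable, chronologically dense Lorentzian metric space satisfying the S-property, and let $(P,F),(P',F')\in\overline{X}$ with $F\neq\emptyset\neq P'$. Then there exist a past chain $\{q_n\}$ with $F=I^+[\{q_n\}]$ and a future chain $\{p'_n\}$ with $P'=I^-[\{p'_n\}]$; for any such chains the limit $\lim_n\tau(q_n,p'_n)$ exists in $[0,\infty]$, and it does not depend on the choice of the chains. Consequently $\overline{\tau}:\overline X\times\overline X\to[0,\infty]$ is well defined.
   Context: A Lorentzian metric space $(X,\sigma,\tau)$ is a topological space with $\tau:X\times X\to[0,\infty]$ lower semicontinuous and satisfying $\tau(x,z)\geq\tau(x,y)+\tau(y,z)$ whenever $\tau(x,y),\tau(y,z)>0$. Write $x\ll y$ iff $\tau(x,y)>0$, $I^+(x)=\{y:x\ll y\}$, $I^-(x)=\{y:y\ll x\}$, $I^\pm[A]=\bigcup_{a\in A}I^\pm(a)$. Future (resp. past) chain: $x_n\ll x_{n+1}$ (resp. $x_{n+1}\ll x_n$) for all $n$. Separable: there is a countable $S$ with $x\ll y\Rightarrow\exists s\in S$, $x\ll s\ll y$. Chronologically dense: every $x$ with $I^-(x)\neq\emptyset$ (resp. $I^+(x)\neq\emptyset$) is the $\sigma$-limit of a future (resp. past) chain. Past set: $P=I^-[P]$; $\downarrow S=I^-[\{p:p\ll q\ \forall q\in S\}]$; IP: past set not the union of two proper past subsets; PIP: IP of the form $I^-(p)$; future sets, $\uparrow S$, IF, PIF dually. For nonempty IP $P$ and IF $F$, $P\sim_S F$ iff $P$ is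 a maximal IP in $\downarrow F$ and $F$ a maximal IF in $\uparrow P$; $P\sim_S\emptyset$ (resp. $\emptyset\sim_S F$) if the nonempty $P$ (resp. $F$) is S-related to no nonempty IF (resp. IP). S-property: for every $x$, $I^-(x)\sim_S I^+(x)$, and no PIF other than $I^+(x)$ (resp. PIP other than $I^-(x)$) is S-related to $I^-(x)$ (resp. $I^+(x)$). c-completion $\overline X=\{(P,F):P\sim_S F\}$. The map $\overline\tau$ is defined by $\overline\tau((P,F),(P',F'))=0$ if $F=\emptyset$ or $P'=\emptyset$, and $\overline\tau((P,F),(P',F'))=\lim_n\tau(q_n,p'_n)$ otherwise, with chains as in the claim. *)

(* Defs.v *)
From HB Require Import structures.
From mathcomp Require Import all_boot all_order all_algebra.
From mathcomp Require Import all_classical all_reals all_analysis.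
Set Implicit Arguments. Unset Strict Implicit. Unset Printing Implicit Defensive.
Import Order.TTheory GRing.Theory Num.Theory.
Local Open Scope classical_set_scope.
Local Open Scope ereal_scope.

Section LMS.
Context {R : realType} {X : topologicalType}.
Variable tau : X -> X -> \bar R.

Definition lorentzian_metric_space : Prop :=
  (forall x y, 0 <= tau x y) /\
  lower_semicontinuous (fun z : X * X => tau z.1 z.2) /\
  (forall x y z, 0 < tau x y -> 0 < tau y z -> tau x y + tau y z <= tau x z).

Definition chron (x y : X) : Prop := 0 < tau x y.

Definition Ifut (x : X) : set X := [set y | chron x y].
Definition Ipast (x : X) : set X := [set y | chron y x].
Definition IfutS (A : set X) : set X := \bigcup_(a in A) Ifut a.
Definition IpastS (A : set X) : set X := \bigcup_(a in A) Ipast a.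

Definition future_chain (s : nat -> X) : Prop := forall n, chron (s n) (s n.+1).
Definition past_chain (s : nat -> X) : Prop := forall n, chron (s n.+1) (s n).

Definition lms_separable : Prop :=
  exists S : set X, countable S /\
    forall x y, chron x y -> exists2 s, S s & chron x s /\ chron s y.

Definition chron_dense : Prop :=
  (forall x, Ipast x !=set0 -> exists s, future_chain s /\ s @ \oo --> x) /\
  (forall x, Ifut x !=set0 -> exists s, past_chain s /\ s @ \oo --> x).

Definition past_set (P : set X) : Prop := P = IpastS P.
Definition future_set (F : set X) : Prop := F = IfutS F.

Definition down (S : set X) : set X := IpastS [set p | forall q, S q -> chron p q].
Definition up (S : set X) : set X := IfutS [set p | forall q, S q -> chron q p].

Definition isIP (P : set X) : Prop :=
  past_set P /\
  ~ (exists P1 P2, past_set P1 /\ past_set P2 /\ P1 `<` P /\ P2 `<` P /\ P = P1 `|` P2).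
Definition isIF (F : set X) : Prop :=
  future_set F /\
  ~ (exists F1 F2, future_set F1 /\ future_set F2 /\ F1 `<` F /\ F2 `<` F /\ F = F1 `|` F2).

Definition maximal_IP_in (P A : set X) : Prop :=
  isIP P /\ P `<=` A /\ forall P', isIP P' -> P `<=` P' -> P' `<=` A -> P' = P.
Definition maximal_IF_in (F A : set X) : Prop :=
  isIF F /\ F `<=` A /\ forall F', isIF F' -> F `<=` F' -> F' `<=` A -> F' = F.

Definition Srel_ne (P F : set X) : Prop :=
  P !=set0 /\ F !=set0 /\ isIP P /\ isIF F /\
  maximal_IP_in P (down F) /\ maximal_IF_in F (up P).

Definition Srel (P F : set X) : Prop :=
  Srel_ne P F \/
  (P !=set0 /\ F = set0 /\ isIP P /\
     forall F', F' !=set0 -> isIF F' -> ~ Srel_ne P F') \/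
  (P = set0 /\ F !=set0 /\ isIF F /\
     forall P', P' !=set0 -> isIP P' -> ~ Srel_ne P' F).

Definition S_property : Prop :=
  forall x,
    Srel (Ipast x) (Ifut x) /\
    (forall y, isIF (Ifut y) -> Srel (Ipast x) (Ifut y) -> Ifut y = Ifut x) /\
    (forall y, isIP (Ipast y) -> Srel (Ipast y) (Ifut x) -> Ipast y = Ipast x).

Definition c_completion : set (set X * set X) := [set PF | Srel PF.1 PF.2].

End LMS.

(* Main.v *)
Require Import Defs.
From HB Require Import structures.
From mathcomp Require Import all_boot all_order all_algebra.
From mathcomp Require Import all_classical all_reals all_analysis.
Import Order.TTheory GRing.Theory Num.Theory.
Local Open Scope classical_set_scope.
Local Open Scope ereal_scope.

Section Helpers.
Context {R : realType} {X : topologicalType}.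
Variable tau : X -> X -> \bar R.
Hypothesis Htr : forall x y z, chron tau x y -> chron tau y z -> chron tau x z.

Lemma IP_directed
  (Hint : forall x y, chron tau x y -> exists s, chron tau x s /\ chron tau s y)
  (P : set X) : isIP tau P -> forall p q, P p -> P q ->
  exists r, [/\ P r, chron tau p r & chron tau q r].
Proof.
move=> [PP nsplit] p q Pp Pq; apply: contrapT => nodir; apply: nsplit.
have PPy : forall y, P y -> exists2 a, P a & chron tau y a.
  by move=> y; rewrite {1}PP => -[a Pa ya]; exists a.
have PPb : forall y a, P a -> chron tau y a -> P y.
  by move=> y a Pa ya; rewrite PP; exists a.
pose A (u : X) := IpastS tau (P `&` ~` Ifut tau u).
have Asub : forall u, A u `<=` P.
  by move=> u y [a [Pa _] ya]; exact: PPb Pa ya.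
have Apast : forall u, past_set tau (A u).
  move=> u; rewrite /past_set; apply/seteqP; split.
  - move=> y [a [Pa na] ya]; have [s [ys sa]] := Hint _ _ ya.
    by exists s => //; exists a.
  - move=> y [b [a Aa ba] yb]; exists a => //; exact: Htr yb ba.
have Aprop : forall u, P u -> A u `<` P.
  move=> u Pu; split; first exact: Asub.
  move=> PA; have [c Pc uc] := PPy _ Pu.
  have [a [Pa na] ca] := PA _ Pc; apply: na; exact: Htr uc ca.
exists (A p), (A q); split; first exact: Apast.
split; first exact: Apast.
split; first exact: Aprop.
split; first exact: Aprop.
apply/seteqP; split; last by move=> y [] /Asub.
move=> y Py; have [a Pa ya] := PPy _ Py.
case: (pselect (Ifut tau p a)) => hp; last by left; exists a.
case: (pselect (Ifut tau q a)) => hq; last by right; exists a.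
by exfalso; apply: nodir; exists a; split.
Qed.

Lemma IP_chain (sep : lms_separable tau) (P : set X) :
  isIP tau P -> P !=set0 ->
  exists p : nat -> X, future_chain tau p /\ P = IpastS tau (range p).
Proof.
move=> IPP [p0 Pp0].
have [S [cS HS]] := sep.
have Hint : forall x y, chron tau x y -> exists s, chron tau x s /\ chron tau s y.
  by move=> x y /HS [s _ h]; exists s.
have dir := IP_directed Hint _ IPP.
have PP := IPP.1.
have PPy : forall y, P y -> exists2 a, P a & chron tau y a.
  by move=> y; rewrite {1}PP => -[a Pa ya]; exists a.
have PPb : forall y a, P a -> chron tau y a -> P y.
  by move=> y a Pa ya; rewrite PP; exists a.
have [e He] : exists e : nat -> X, S `<=` range e.
  move/pfcard_geP: cS => [->|[g]]; first by exists (fun _ => p0) => ? [].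
  exists g => s Ss; have [n _ <-] := (@surj _ _ _ _ g) s Ss; by exists n.
have /choice [f Hf] : forall nu : nat * X, exists z, P nu.2 ->
    [/\ P z, chron tau nu.2 z & (P (e nu.1) -> chron tau (e nu.1) z)].
  move=> [n u] /=; case: (pselect (P u)) => Pu; last by exists u.
  case: (pselect (P (e n))) => Pe.
  - by have [r [Pr ur er]] := dir _ _ Pu Pe; exists r.
  - by have [r Pr ur] := PPy u Pu; exists r => _; split.
pose p := fix p n := match n with 0%N => p0 | n'.+1 => f (n', p n') end.
have Pp : forall n, P (p n).
  by elim => //= n IH; have [] := Hf (n, p n) IH.
exists p; split.
  by move=> n /=; have [] := Hf (n, p n) (Pp n).
apply/seteqP; split.
- move=> y Py; have [a Pa ya] := PPy _ Py.
  have [s Ss [ys sa]] := HS _ _ ya.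
  have [n _ en] := He _ Ss.
  have Ps : P s := PPb _ _ Pa sa.
  exists (p n.+1); first by exists n.+1.
  have [_ _ H] := Hf (n, p n) (Pp n).
  apply: Htr ys _; rewrite -en; apply: H; rewrite /= en //.
- by move=> y [_ [n _ <-] yn]; exact: PPb (Pp n) yn.
Qed.

End Helpers.

Theorem mainTheorem15 (R : realType) (X : topologicalType) (tau : X -> X -> \bar R) :
  lorentzian_metric_space tau ->
  lms_separable tau ->
  chron_dense tau ->
  S_property tau ->
  forall P F P' F' : set X,
    c_completion tau (P, F) -> c_completion tau (P', F') ->
    F !=set0 -> P' !=set0 ->
    (exists q : nat -> X, past_chain tau q /\ F = IfutS tau (range q)) /\
    (exists p' : nat -> X, future_chain tau p' /\ P' = IpastS tau (range p')) /\
    (exists2 L : \bar R, 0 <= L &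
       forall (q p' : nat -> X),
         past_chain tau q -> F = IfutS tau (range q) ->
         future_chain tau p' -> P' = IpastS tau (range p') ->
         (fun n => tau (q n) (p' n)) @ \oo --> L).
Proof.
move=> [Hpos [_ Htri]] sep _ _ P F P' F' cPF cPF' Fne P'ne.
have Htr : forall x y z, chron tau x y -> chron tau y z -> chron tau x z.
  move=> x y z hxy hyz; apply: lt_le_trans (Htri _ _ _ hxy hyz).
  apply: lt_le_trans hxy _; rewrite addeC; exact: lee_paddl.
have Htr' : forall x y z, chron (fun a b => tau b a) x y ->
    chron (fun a b => tau b a) y z -> chron (fun a b => tau b a) x z.
  by move=> x y z h1 h2; exact: Htr h2 h1.
have sep' : lms_separable (fun a b => tau b a).
  have [S [cS HS]] := sep; exists S; split => // x y hxy.
  by have [s Ss [h1 h2]] := HS _ _ hxy; exists s.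
have {}cPF : Srel tau P F := cPF.
have {}cPF' : Srel tau P' F' := cPF'.
have IFF : isIF tau F.
  case: cPF => [[_ [_ [_ [? _]]]]|[[_ [F0 _]]|[_ [_ [? _]]]]] //.
  by move: Fne; rewrite F0 => -[].
have IPP' : isIP tau P'.
  case: cPF' => [[_ [_ [? _]]]|[[_ [_ [? _]]]|[P0 _]]] //.
  by move: P'ne; rewrite P0 => -[].
have [q0 [q0c q0F]] : exists q, past_chain tau q /\ F = IfutS tau (range q).
  exact: (@IP_chain _ _ (fun a b => tau b a) Htr' sep' _ IFF Fne).
have [p0 [p0c p0P]] : exists p, future_chain tau p /\ P' = IpastS tau (range p).
  exact: (@IP_chain _ _ tau Htr sep _ IPP' P'ne).
split; first by exists q0.
split; first by exists p0.
have mono_l : forall a b c, chron tau c a -> tau a b <= tau c b.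
  move=> a b c hca; have := Hpos a b; rewrite le_eqVlt => /orP[/eqP <-|h].
    exact: Hpos.
  apply: le_trans (Htri _ _ _ hca h); exact: lee_paddl.
have mono_r : forall a b d, chron tau b d -> tau a b <= tau a d.
  move=> a b d hbd; have := Hpos a b; rewrite le_eqVlt => /orP[/eqP <-|h].
    exact: Hpos.
  apply: le_trans (Htri _ _ _ h hbd); rewrite addeC; exact: lee_paddl.
have mono2 : forall q p, past_chain tau q -> future_chain tau p ->
    forall i j k l, tau (q i) (p j) <= tau (q (i + k)%N) (p (j + l)%N).
  move=> q p qc pc i j k l.
  apply: (@le_trans _ _ (tau (q (i + k)%N) (p j))).
    elim: k => [|k IH]; first by rewrite addn0.
    by apply: le_trans IH _; rewrite addnS; exact: mono_l.
  elim: l => [|l IH]; first by rewrite addn0.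
  by apply: le_trans IH _; rewrite addnS; exact: mono_r.
have nd : forall q p, past_chain tau q -> future_chain tau p ->
    nondecreasing_seq (fun n => tau (q n) (p n)).
  move=> q p qc pc n m nm /=.
  by have := mono2 q p qc pc n n (m - n)%N (m - n)%N; rewrite subnKC.
have cmp : forall q p r s, past_chain tau q -> future_chain tau p ->
    past_chain tau r -> future_chain tau s ->
    IfutS tau (range q) = IfutS tau (range r) ->
    IpastS tau (range p) = IpastS tau (range s) ->
    ereal_sup (range (fun n => tau (q n) (p n))) <=
    ereal_sup (range (fun n => tau (r n) (s n))).
  move=> q p r s qc pc rc sc Eqr Eps.
  apply: ge_ereal_sup => _ [n _ <-].
  have : IfutS tau (range q) (q n) by exists (q n.+1); [exists n.+1 | exact: qc].
  rewrite Eqr => -[_ [m _ <-] rq].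
  have : IpastS tau (range p) (p n) by exists (p n.+1); [exists n.+1 | exact: pc].
  rewrite Eps => -[_ [k _ <-] ps].
  apply: le_trans (ereal_sup_ubound _); last by exists (m + k)%N.
  apply: le_trans (mono_l _ _ _ rq) _.
  apply: le_trans (mono_r _ _ _ ps) _.
  by have := mono2 r s rc sc m k k m; rewrite [(k + m)%N]addnC.
exists (ereal_sup (range (fun n => tau (q0 n) (p0 n)))).
  apply: le_trans (Hpos (q0 0%N) (p0 0%N)) _.
  by apply: ereal_sup_ubound; exists 0%N.
move=> q p qc qF pc pP.
have -> : ereal_sup (range (fun n => tau (q0 n) (p0 n))) =
          ereal_sup (range (fun n => tau (q n) (p n))).
  apply: le_anti; apply/andP; split; apply: cmp => //;
    by rewrite -?qF -?q0F -?pP -?p0P.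
exact: ereal_nondecreasing_cvgn (nd q p qc pc).
Qed.
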